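(* Every non-trivial filter class $\mathsf{K}$ contained in $\mathsf{BA}_\infty$ with $\mathsf{K}\neq\mathsf{BA}_1$ contains the structure $\mathbf{B}_2\times\mathbf{B}_1=\langle \mathbf{2}^2\times\mathbf{2},\;P_2\times\{1\}\rangle$, where $\mathbf{2}^2$ is the four-element Boolean algebra, $P_2$ its set of non-zero elements and $\mathbf{2}$ the two-element Boolean algebra.
   Context: Structures are pairs $\langle\mathbf{A},F\rangle$ with $\mathbf{A}$ a Boolean algebra and $F\subseteq\mathbf{A}$. A homomorphism $h\colon\langle\mathbf{A},F\rangle\to\langle\mathbf{B},G\rangle$ is strict if $F=h^{-1}[G]$. A filter class is a class closed under isomorphism, substructures $\langle\mathbf{B},F\cap\mathbf{B}\rangle$, products $\langle\prod\mathbf{A}_i,\prod F_i\rangle$ and strict homomorphic preimages (along surjective strict homomorphisms); it is trivial if all members have $F=\mathbf{A}$. $\mathsf{BA}_\infty$ is the class of all $\langle\mathbf{A},F\rangle$ with $F$ a non-empty upset, and $\mathsf{BA}_1$ its subclass with $F$ a non-empty filter (upset closed under binary meets). *)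

(* Defs.v *)
From Stdlib Require Import FunctionalExtensionality.

Record BA := MkBA {
  car :> Type;
  bjoin : car -> car -> car;
  bmeet : car -> car -> car;
  bcompl : car -> car;
  bbot : car;
  btop : car;
  joinC : forall x y, bjoin x y = bjoin y x;
  meetC : forall x y, bmeet x y = bmeet y x;
  joinA : forall x y z, bjoin x (bjoin y z) = bjoin (bjoin x y) z;
  meetA : forall x y z, bmeet x (bmeet y z) = bmeet (bmeet x y) z;
  absorbJM : forall x y, bjoin x (bmeet x y) = x;
  absorbMJ : forall x y, bmeet x (bjoin x y) = x;
  distrMJ : forall x y z, bmeet x (bjoin y z) = bjoin (bmeet x y) (bmeet x z);
  join0 : forall x, bjoin x bbot = x;
  meet1 : forall x, bmeet x btop = x;
  complM : forall x, bmeet x (bcompl x) = bbot;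
  complJ : forall x, bjoin x (bcompl x) = btop
}.

Arguments bjoin {b}. Arguments bmeet {b}. Arguments bcompl {b}.
Arguments bbot {b}. Arguments btop {b}.

Definition ble {A : BA} (x y : A) : Prop := bmeet x y = x.

Definition is_hom {A B : BA} (h : A -> B) : Prop :=
  (forall x y, h (bjoin x y) = bjoin (h x) (h y)) /\
  (forall x y, h (bmeet x y) = bmeet (h x) (h y)) /\
  (forall x, h (bcompl x) = bcompl (h x)) /\
  h bbot = bbot /\ h btop = btop.

Definition strict {A B : BA} (h : A -> B) (F : A -> Prop) (G : B -> Prop) : Prop :=
  forall a, F a <-> G (h a).

Definition injective {X Y : Type} (f : X -> Y) := forall x y, f x = f y -> x = y.
Definition surjective {X Y : Type} (f : X -> Y) := forall y, exists x, f x = y.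

Section Product.
Variables (I : Type) (A : I -> BA).
Definition pcar := forall i, A i.
Definition pjoin (x y : pcar) : pcar := fun i => bjoin (x i) (y i).
Definition pmeet (x y : pcar) : pcar := fun i => bmeet (x i) (y i).
Definition pcompl (x : pcar) : pcar := fun i => bcompl (x i).
Definition pbot : pcar := fun i => bbot.
Definition ptop : pcar := fun i => btop.
Ltac fe := intros; apply functional_extensionality_dep; intro i;
  unfold pjoin, pmeet, pcompl, pbot, ptop.
Lemma p_joinC x y : pjoin x y = pjoin y x. Proof. fe; apply joinC. Qed.
Lemma p_meetC x y : pmeet x y = pmeet y x. Proof. fe; apply meetC. Qed.
Lemma p_joinA x y z : pjoin x (pjoin y z) = pjoin (pjoin x y) z. Proof. fe; apply joinA. Qed.
Lemma p_meetA x y z : pmeet x (pmeet y z) = pmeet (pmeet x y) z. Proof. fe; apply meetA. Qed.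
Lemma p_absJM x y : pjoin x (pmeet x y) = x. Proof. fe; apply absorbJM. Qed.
Lemma p_absMJ x y : pmeet x (pjoin x y) = x. Proof. fe; apply absorbMJ. Qed.
Lemma p_distr x y z : pmeet x (pjoin y z) = pjoin (pmeet x y) (pmeet x z).
Proof. fe; apply distrMJ. Qed.
Lemma p_join0 x : pjoin x pbot = x. Proof. fe; apply join0. Qed.
Lemma p_meet1 x : pmeet x ptop = x. Proof. fe; apply meet1. Qed.
Lemma p_complM x : pmeet x (pcompl x) = pbot. Proof. fe; apply complM. Qed.
Lemma p_complJ x : pjoin x (pcompl x) = ptop. Proof. fe; apply complJ. Qed.
Definition prodBA : BA :=
  MkBA pcar pjoin pmeet pcompl pbot ptop p_joinC p_meetC p_joinA p_meetA
       p_absJM p_absMJ p_distr p_join0 p_meet1 p_complM p_complJ.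
End Product.

Definition sclass := forall A : BA, (A -> Prop) -> Prop.

Definition closed_iso (K : sclass) : Prop :=
  forall (A B : BA) (F : A -> Prop) (G : B -> Prop) (h : A -> B),
    is_hom h -> injective h -> surjective h -> strict h F G ->
    K A F -> K B G.

(* substructures <B, F ∩ B>, B a subalgebra of A (given via an embedding) *)
Definition closed_sub (K : sclass) : Prop :=
  forall (A B : BA) (F : A -> Prop) (e : B -> A),
    is_hom e -> injective e -> K A F -> K B (fun b => F (e b)).

Definition closed_prod (K : sclass) : Prop :=
  forall (I : Type) (A : I -> BA) (F : forall i, A i -> Prop),
    (forall i, K (A i) (F i)) ->
    K (prodBA I A) (fun x : pcar I A => forall i, F i (x i)).

Definition closed_spre (K : sclass) : Prop :=
  forall (A B : BA) (G : B -> Prop) (h : A -> B),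
    is_hom h -> surjective h -> K B G -> K A (fun a => G (h a)).

Definition filter_class (K : sclass) : Prop :=
  closed_iso K /\ closed_sub K /\ closed_prod K /\ closed_spre K.

Definition trivial_class (K : sclass) : Prop :=
  forall (A : BA) (F : A -> Prop), K A F -> forall a, F a.

Definition upset {A : BA} (F : A -> Prop) : Prop :=
  forall x y : A, F x -> ble x y -> F y.

Definition BAinf : sclass := fun A F => (exists a, F a) /\ upset F.

Definition BA1 : sclass := fun A F =>
  (exists a, F a) /\ upset F /\ (forall x y : A, F x -> F y -> F (bmeet x y)).

(* The algebra 2^2 x 2, carrier (bool*bool)*bool, componentwise operations *)
Definition c8 := ((bool * bool) * bool)%type.
Definition j8 (x y : c8) : c8 :=
  let '((a,b),c) := x in let '((a',b'),c') := y in ((orb a a', orb b b'), orb c c').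
Definition m8 (x y : c8) : c8 :=
  let '((a,b),c) := x in let '((a',b'),c') := y in ((andb a a', andb b b'), andb c c').
Definition n8 (x : c8) : c8 := let '((a,b),c) := x in ((negb a, negb b), negb c).
Definition bot8 : c8 := ((false,false),false).
Definition top8 : c8 := ((true,true),true).
Ltac b8 := intros; repeat match goal with x : c8 |- _ => destruct x as [[? ?] ?] end;
  simpl; repeat match goal with b : bool |- _ => destruct b end; reflexivity.
Lemma e1 x y : j8 x y = j8 y x. Proof. b8. Qed.
Lemma e2 x y : m8 x y = m8 y x. Proof. b8. Qed.
Lemma e3 x y z : j8 x (j8 y z) = j8 (j8 x y) z. Proof. b8. Qed.
Lemma e4 x y z : m8 x (m8 y z) = m8 (m8 x y) z. Proof. b8. Qed.
Lemma e5 x y : j8 x (m8 x y) = x. Proof. b8. Qed.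
Lemma e6 x y : m8 x (j8 x y) = x. Proof. b8. Qed.
Lemma e7 x y z : m8 x (j8 y z) = j8 (m8 x y) (m8 x z). Proof. b8. Qed.
Lemma e8 x : j8 x bot8 = x. Proof. b8. Qed.
Lemma e9 x : m8 x top8 = x. Proof. b8. Qed.
Lemma e10 x : m8 x (n8 x) = bot8. Proof. b8. Qed.
Lemma e11 x : j8 x (n8 x) = top8. Proof. b8. Qed.
Definition BA2_2x2 : BA :=
  MkBA c8 j8 m8 n8 bot8 top8 e1 e2 e3 e4 e5 e6 e7 e8 e9 e10 e11.

Definition P2x1 (x : BA2_2x2) : Prop :=
  let '((a,b),c) := (x : c8) in (orb a b = true) /\ c = true.

(* Main.v *)
Require Import Defs.
From Stdlib Require Import Classical ClassicalEpsilon FunctionalExtensionality PropExtensionality ProofIrrelevance Bool.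

Arguments joinC {b}. Arguments meetC {b}. Arguments joinA {b}. Arguments meetA {b}.
Arguments absorbJM {b}. Arguments absorbMJ {b}. Arguments distrMJ {b}. Arguments join0 {b}.
Arguments meet1 {b}. Arguments complM {b}. Arguments complJ {b}.

Section Lat.
Variable A : BA.
Implicit Types x y z u a b p q : A.
Lemma meet_idem x : bmeet x x = x.
Proof. rewrite <- (absorbJM x x) at 2. apply absorbMJ. Qed.
Lemma join_idem x : bjoin x x = x.
Proof. rewrite <- (absorbMJ x x) at 2. apply absorbJM. Qed.
Lemma meet0 x : bmeet x bbot = bbot.
Proof. rewrite <- (complM x). rewrite meetA, meet_idem. reflexivity. Qed.
Lemma ble_trans x y z : ble x y -> ble y z -> ble x z.
Proof. unfold ble; intros H1 H2. rewrite <- H1, <- meetA, H2. reflexivity. Qed.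
Lemma ble_glb u a b : ble u a -> ble u b -> ble u (bmeet a b).
Proof. unfold ble; intros H1 H2. rewrite meetA, H1, H2. reflexivity. Qed.
Lemma ble_ml a b : ble (bmeet a b) a.
Proof. unfold ble. rewrite (meetC (bmeet a b) a), meetA, meet_idem. reflexivity. Qed.
Lemma ble_mr a b : ble (bmeet a b) b.
Proof. unfold ble. rewrite <- meetA, meet_idem. reflexivity. Qed.
Lemma ble_jl a b : ble a (bjoin a b).
Proof. unfold ble. apply absorbMJ. Qed.
Lemma ble_jr a b : ble b (bjoin a b).
Proof. unfold ble. rewrite joinC. apply absorbMJ. Qed.
Lemma ble_top x : ble x btop.
Proof. apply meet1. Qed.
Lemma ble_bot x : ble bbot x.
Proof. unfold ble. rewrite meetC. apply meet0. Qed.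
Lemma ble_refl x : ble x x.
Proof. apply meet_idem. Qed.
Lemma ble_join p q a : ble p a -> ble q a -> ble (bjoin p q) a.
Proof. unfold ble; intros H1 H2. rewrite meetC, distrMJ, (meetC a p), (meetC a q), H1, H2. reflexivity. Qed.
Lemma split_b x b : x = bjoin (bmeet x b) (bmeet x (bcompl b)).
Proof. rewrite <- distrMJ, complJ, meet1. reflexivity. Qed.
Lemma ble_antisym x y : ble x y -> ble y x -> x = y.
Proof. unfold ble; intros H1 H2. rewrite <- H1, meetC. exact H2. Qed.
End Lat.

Lemma bc1 x y : orb x y = orb y x. Proof. destruct x, y; reflexivity. Qed.
Lemma bc2 x y : andb x y = andb y x. Proof. destruct x, y; reflexivity. Qed.
Lemma bc3 x y z : orb x (orb y z) = orb (orb x y) z. Proof. destruct x, y, z; reflexivity. Qed.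
Lemma bc4 x y z : andb x (andb y z) = andb (andb x y) z. Proof. destruct x, y, z; reflexivity. Qed.
Lemma bc5 x y : orb x (andb x y) = x. Proof. destruct x, y; reflexivity. Qed.
Lemma bc6 x y : andb x (orb x y) = x. Proof. destruct x, y; reflexivity. Qed.
Lemma bc7 x y z : andb x (orb y z) = orb (andb x y) (andb x z). Proof. destruct x, y, z; reflexivity. Qed.
Lemma bc8 x : orb x false = x. Proof. destruct x; reflexivity. Qed.
Lemma bc9 x : andb x true = x. Proof. destruct x; reflexivity. Qed.
Lemma bc10 x : andb x (negb x) = false. Proof. destruct x; reflexivity. Qed.
Lemma bc11 x : orb x (negb x) = true. Proof. destruct x; reflexivity. Qed.
Definition BA2 : BA := MkBA bool orb andb negb false true bc1 bc2 bc3 bc4 bc5 bc6 bc7 bc8 bc9 bc10 bc11.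

Lemma sub_antisym {X : Type} (S T : X -> Prop) : (forall z, S z -> T z) -> (forall z, T z -> S z) -> S = T.
Proof. intros H1 H2. apply functional_extensionality; intro z. apply propositional_extensionality; split; auto. Qed.

Lemma bool_eq_iff (b c : bool) : (b = true <-> c = true) -> b = c.
Proof. destruct b, c; intuition. Qed.

Section Ultra.
Variables (A : BA) (F : A -> Prop) (a : A).
Hypotheses (Fne : exists z, F z) (Fup : upset F)
  (Fmeet : forall x y, F x -> F y -> F (bmeet x y)) (Fa : ~ F a).

Definition sub (S T : A -> Prop) := forall z, S z -> T z.
Definition good (S : A -> Prop) := upset S /\ (forall x y, S x -> S y -> S (bmeet x y)) /\ sub F S /\ ~ S a.
Definition g (S : A -> Prop) : A -> Prop :=
  match excluded_middle_informative (exists T, good T /\ sub S T /\ ~ sub T S) with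
  | left H => proj1_sig (constructive_indefinite_description _ H)
  | right _ => S end.
Definition sup (C : (A -> Prop) -> Prop) : A -> Prop := fun z => F z \/ exists S, C S /\ S z.
Inductive Tw : (A -> Prop) -> Prop :=
 | Tg S : Tw S -> Tw (g S)
 | Ts C : (forall S, C S -> Tw S) -> Tw (sup C).

Lemma g_infl S : sub S (g S).
Proof. unfold g; destruct excluded_middle_informative as [H|H].
  - destruct constructive_indefinite_description as [T HT]; simpl; tauto.
  - intros z; auto. Qed.
Lemma g_good S : good S -> good (g S).
Proof. unfold g; destruct excluded_middle_informative as [H|H]; auto.
  destruct constructive_indefinite_description as [T HT]; simpl; tauto. Qed.
Lemma g_fix S : sub (g S) S -> forall T, good T -> sub S T -> sub T S.
Proof. unfold g; destruct excluded_middle_informative as [H|H].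
  - destruct constructive_indefinite_description as [T0 HT]; simpl. intros; exfalso; tauto.
  - intros _ T HT HST. apply NNPP; intro; apply H; eauto. Qed.
Lemma Tw_F S : Tw S -> sub F S.
Proof. induction 1. - intros z Hz; apply g_infl; auto. - intros z Hz; left; auto. Qed.

Definition lt S T := sub S T /\ ~ sub T S.
Definition extreme c := Tw c /\ forall x, Tw x -> lt x c -> sub (g x) c.

Lemma L1 c : extreme c -> forall x, Tw x -> sub x c \/ sub (g c) x.
Proof.
  intros [Tc Ec] x Tx. induction Tx as [S TS IH | C HC IH].
  - destruct IH as [H|H].
    + destruct (classic (sub c S)) as [H'|H'].
      * assert (S = c) by (apply sub_antisym; auto). subst. right; intros z; auto.
      * left. apply Ec; auto. split; auto.
    + right. intros z Hz. apply g_infl; auto.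
  - destruct (classic (exists S, C S /\ sub (g c) S)) as [[S [CS HS]]|H].
    + right. intros z Hz; right; exists S; auto.
    + left. intros z [Hz|[S [CS Sz]]].
      * apply (Tw_F c Tc); auto.
      * destruct (IH S CS) as [H1|H1]; auto. exfalso; eauto.
Qed.

Lemma L2 : forall x, Tw x -> extreme x.
Proof.
  induction 1 as [S TS IH | C HC IH].
  - split. constructor; auto. intros x Tx [Hx1 Hx2].
    destruct (L1 S IH x Tx) as [H|H]; [|exfalso; auto].
    destruct (classic (sub S x)) as [H'|H'].
    + assert (x = S) by (apply sub_antisym; auto). subst. intros z; auto.
    + intros z Hz. apply g_infl. apply (proj2 IH x Tx); auto. split; auto.
  - split. constructor; auto. intros x Tx [Hx1 Hx2].
    destruct (classic (exists c, C c /\ sub x c)) as [[c [Cc Hxc]]|Hn].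
    + destruct (classic (sub c x)) as [H'|H'].
      * assert (x = c) by (apply sub_antisym; auto). subst x.
        assert (exists z, sup C z /\ ~ c z) as [z [Hz Hcz]].
        { apply NNPP; intro Hn; apply Hx2; intros z Hz; apply NNPP; intro; apply Hn; eauto. }
        destruct Hz as [Hz|[c' [Cc' c'z]]].
        { exfalso; apply Hcz; apply (Tw_F c); auto. }
        destruct (L1 c' (IH c' Cc') c Tx) as [H1|H1].
        { intros w Hw; right; exists c'; split; auto.
          apply (proj2 (IH c' Cc') c Tx); auto. split; auto. }
        { exfalso; apply Hcz; apply H1; apply g_infl; auto. }
      * intros z Hz; right; exists c; split; auto. apply (proj2 (IH c Cc) x Tx); auto. split; auto.
    + exfalso; apply Hx2. intros z [Hz|[c [Cc cz]]].
      * apply (Tw_F x Tx); auto.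
      * destruct (L1 c (IH c Cc) x Tx) as [H1|H1]; [exfalso; eauto|]. apply H1, g_infl; auto.
Qed.

Lemma chain x y : Tw x -> Tw y -> sub x y \/ sub y x.
Proof. intros Tx Ty. destruct (L1 y (L2 y Ty) x Tx) as [H|H]; auto.
  right; intros z Hz; apply H, g_infl; auto. Qed.

Lemma Tw_good x : Tw x -> good x.
Proof.
  induction 1 as [S TS IH | C HC IH]. - apply g_good; auto.
  - split; [|split; [|split]].
    + intros u v [Hu|[S [CS Su]]] Huv. left; eapply Fup; eauto.
      right; exists S; split; auto. destruct (IH S CS) as [Hs _]. eapply Hs; eauto.
    + intros u v [Hu|[S [CS Su]]] [Hv|[S' [CS' Sv]]].
      * left; auto.
      * right; exists S'; split; auto. destruct (IH S' CS') as [_ [G2 [G3 _]]]; auto.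
      * right; exists S; split; auto. destruct (IH S CS) as [_ [G2 [G3 _]]]; auto.
      * destruct (chain S S' (HC S CS) (HC S' CS')) as [H|H].
        right; exists S'; split; auto. destruct (IH S' CS') as [_ [G2 [G3 _]]]; auto.
        right; exists S; split; auto. destruct (IH S CS) as [_ [G2 [G3 _]]]; auto.
    + intros z Hz; left; auto.
    + intros [H|[S [CS Sa]]]. auto. destruct (IH S CS) as [_ [_ [_ G4]]]; auto.
Qed.

Lemma maximal : exists M, good M /\ forall T, good T -> sub M T -> sub T M.
Proof.
  exists (sup Tw). assert (Ts' : Tw (sup Tw)) by (constructor; auto).
  split. apply Tw_good; auto.
  apply g_fix. intros z Hz. right. exists (g (sup Tw)). split; auto. constructor; auto.
Qed.

Lemma ultra : exists h : A -> BA2, is_hom h /\ (forall z, F z -> h z = true) /\ h a = false.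
Proof.
  destruct maximal as [M [[Mup [Mm [MF Ma]]] Mmax]].
  destruct Fne as [z0 Fz0].
  assert (M1 : M btop) by (apply (Mup z0); auto; apply ble_top).
  assert (M0 : ~ M bbot) by (intro H; apply Ma; apply (Mup bbot); auto; apply ble_bot).
  assert (Tk : forall b, ~ M b -> exists m, M m /\ ble (bmeet m b) a).
  { intros b Hb. apply NNPP; intro Hn. apply Hb.
    set (T := fun z => exists m, M m /\ ble (bmeet m b) z).
    assert (GT : good T).
    { split; [|split; [|split]].
      - intros u v [m [Mm' Hm]] Huv. exists m; split; auto. eapply ble_trans; eauto.
      - intros u v [m [Mm1 H1]] [m' [Mm2 H2]]. exists (bmeet m m'); split; auto.
        apply ble_glb.
        + eapply ble_trans; [|exact H1]. apply ble_glb. eapply ble_trans; apply ble_ml. apply ble_mr.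
        + eapply ble_trans; [|exact H2]. apply ble_glb. eapply ble_trans; [apply ble_ml|apply ble_mr]. apply ble_mr.
      - intros z Hz. exists z; split; auto. apply ble_ml.
      - intro H; apply Hn; exact H. }
    apply (Mmax T GT). intros z Hz; exists z; split; auto; apply ble_ml.
    exists btop; split; auto; apply ble_mr. }
  assert (Prime : forall b, M b \/ M (bcompl b)).
  { intro b. destruct (classic (M b)) as [H|H]; auto. destruct (classic (M (bcompl b))) as [H'|H']; auto.
    exfalso. destruct (Tk b H) as [m [Mm1 H1]]. destruct (Tk _ H') as [m' [Mm2 H2]].
    apply Ma. apply (Mup (bmeet m m')); auto.
    rewrite (split_b _ (bmeet m m') b). apply ble_join.
    - eapply ble_trans; [|exact H1]. apply ble_glb. eapply ble_trans; apply ble_ml. apply ble_mr.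
    - eapply ble_trans; [|exact H2]. apply ble_glb. eapply ble_trans; [apply ble_ml|apply ble_mr]. apply ble_mr. }
  assert (NotBoth : forall b, M b -> M (bcompl b) -> False).
  { intros b H1 H2. apply M0. rewrite <- (complM b). auto. }
  set (h := fun z => if excluded_middle_informative (M z) then true else false).
  assert (hP : forall z, h z = true <-> M z).
  { intro z; unfold h; destruct excluded_middle_informative; intuition discriminate. }
  exists h. split; [|split].
  - split; [|split; [|split; [|split]]].
    + intros u v. apply bool_eq_iff. simpl. rewrite orb_true_iff, !hP. split.
      * intro H. destruct (classic (M u)) as [Hu|Hu]; auto. destruct (classic (M v)) as [Hv|Hv]; auto.
        exfalso. apply Hv. destruct (Prime u) as [|Hcu]; [tauto|].
        apply (Mup (bmeet (bcompl u) (bjoin u v))); auto.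
        rewrite distrMJ, (meetC _ u), complM, joinC, join0. apply ble_mr.
      * intros [H|H]; eapply Mup; eauto. apply ble_jl. apply ble_jr.
    + intros u v. apply bool_eq_iff. simpl. rewrite andb_true_iff, !hP. split.
      * intro H; split; eapply Mup; eauto. apply ble_ml. apply ble_mr.
      * intros [H1 H2]; auto.
    + intros u. apply bool_eq_iff. simpl. rewrite negb_true_iff, hP, <- not_true_iff_false, hP.
      split. intros H1 H2; eauto. intro H; destruct (Prime u); tauto.
    + apply bool_eq_iff. simpl. rewrite hP. intuition discriminate.
    + apply hP; auto.
  - intros z Hz; apply hP; auto.
  - apply not_true_iff_false. rewrite hP. auto.
Qed.
End Ultra.

Lemma separate (A : BA) (s t : A) : s <> t -> exists h : A -> BA2, is_hom h /\ h s <> h t.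
Proof.
  intro Hst.
  assert (gen : forall s t : A, ~ ble s t -> exists h : A -> BA2, is_hom h /\ h s = true /\ h t = false).
  { intros u v Huv. destruct (ultra A (fun z => ble u z) v) as [h [Hh [H1 H2]]].
    - exists u; apply ble_refl.
    - intros p q Hp Hq; eapply ble_trans; eauto.
    - intros p q Hp Hq; apply ble_glb; auto.
    - auto.
    - exists h; split; auto. split; auto. apply H1, ble_refl. }
  destruct (classic (ble s t)) as [H|H].
  - destruct (classic (ble t s)) as [H'|H']. exfalso; apply Hst, ble_antisym; auto.
    destruct (gen t s H') as [h [Hh [H1 H2]]]. exists h; split; auto. rewrite H1, H2; discriminate.
  - destruct (gen s t H) as [h [Hh [H1 H2]]]. exists h; split; auto. rewrite H1, H2; discriminate.
Qed.

Ltac stone :=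
  match goal with |- @eq (car ?A) ?s ?t =>
   apply NNPP; let Hne := fresh "Hne" in intro Hne;
   let h := fresh "h" in let Hj := fresh "Hj" in let Hm := fresh "Hm" in
   let Hc := fresh "Hc" in let H0 := fresh "H0" in let H1 := fresh "H1" in
   let Hst := fresh "Hst" in
   destruct (separate A s t Hne) as [h [[Hj [Hm [Hc [H0 H1]]]] Hst]];
   clear Hne;
   repeat match goal with H : @eq (car A) _ _ |- _ => apply (f_equal h) in H; revert H end;
   revert Hst;
   repeat progress rewrite ?Hj, ?Hm, ?Hc, ?H0, ?H1;
   simpl;
   repeat match goal with |- context [h ?z] => destruct (h z) end;
   simpl; intros; try congruence; tauto
  end.


Section CaseA.
Variables (A : BA) (F : A -> Prop) (x y : A).
Hypotheses (Fup : upset F) (Fx : F x) (Fy : F y) (Fxy : ~ F (bmeet x y)).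
Definition al := bmeet x (bcompl y).
Definition be := bcompl x.
Definition ga := bmeet x y.
Definition fab (p q r : bool) : A :=
  bjoin (if p then al else bbot) (bjoin (if q then be else bbot) (if r then ga else bbot)).
Definition emb8 (s : BA2_2x2) : prodBA bool (fun _ => A) :=
  let '((p,q),r) := (s : c8) in fun i : bool => if i then fab p q r else (if r then btop else bbot).

Lemma emb8_hom : is_hom emb8.
Proof.
  split; [|split; [|split; [|split]]].
  - intros [[p q] r] [[p' q'] r']; apply functional_extensionality_dep; intros [|];
    destruct p, q, r, p', q', r'; simpl; unfold pjoin, fab, al, be, ga; stone.
  - intros [[p q] r] [[p' q'] r']; apply functional_extensionality_dep; intros [|];
    destruct p, q, r, p', q', r'; simpl; unfold pmeet, fab, al, be, ga; stone.
  - intros [[p q] r]; apply functional_extensionality_dep; intros [|];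
    destruct p, q, r; simpl; unfold pcompl, fab, al, be, ga; stone.
  - apply functional_extensionality_dep; intros [|]; simpl; unfold pbot, fab; stone.
  - apply functional_extensionality_dep; intros [|]; simpl; unfold ptop, fab, al, be, ga; stone.
Qed.

Lemma fab_al p q r : bmeet (fab p q r) al = if p then al else bbot.
Proof. destruct p, q, r; unfold fab, al, be, ga; simpl; stone. Qed.
Lemma fab_be p q r : bmeet (fab p q r) be = if q then be else bbot.
Proof. destruct p, q, r; unfold fab, al, be, ga; simpl; stone. Qed.

Lemma Fbot : ~ F bbot.
Proof. intro H; apply Fxy; eapply Fup; eauto; apply ble_bot. Qed.
Lemma Ftop : F btop.
Proof. eapply Fup; eauto; apply ble_top. Qed.

Lemma emb8_inj : injective emb8.
Proof.
  assert (Nal : al <> bbot).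
  { intro H; apply Fxy; apply (Fup x); auto. unfold al in H; unfold ble; stone. }
  assert (Nbe : be <> bbot).
  { intro H; apply Fxy; apply (Fup y); auto. unfold be in H; unfold ble; stone. }
  assert (Ntb : btop <> bbot :> A).
  { intro H; apply Fbot; rewrite <- H; apply Ftop. }
  intros [[p q] r] [[p' q'] r'] Heq.
  pose proof (f_equal (fun g => bmeet (g true) al) Heq) as H1.
  pose proof (f_equal (fun g => bmeet (g true) be) Heq) as H2.
  pose proof (f_equal (fun g => g false) Heq) as H3.
  simpl in H1, H2, H3. rewrite !fab_al in H1. rewrite !fab_be in H2.
  destruct p, q, r, p', q', r'; simpl in *; congruence.
Qed.

Lemma caseA (K : sclass) : filter_class K -> K A F -> K BA2_2x2 P2x1.
Proof.
  intros [Ki [Ks [Kp Kspre]]] KAF.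
  assert (KP := Kp bool (fun _ => A) (fun _ => F) (fun _ => KAF)).
  assert (KS := Ks (prodBA bool (fun _ => A)) BA2_2x2 _ emb8 emb8_hom emb8_inj KP). simpl in KS.
  apply (Ki _ _ _ P2x1 (fun s => s)) in KS; auto.
  - repeat split; auto.
  - intros u v; auto.
  - intros u; exists u; auto.
  - intros [[p q] r]. simpl. split.
    + intro H. pose proof (H true) as Ht. pose proof (H false) as Hf. simpl in Ht, Hf.
      destruct r; [|exfalso; apply Fbot; auto].
      destruct p, q; simpl; auto. exfalso. apply Fxy. apply (Fup _ _ Ht).
      unfold ble, fab, ga; simpl; stone.
    + intros [Hpq Hr]; subst r. intros [|].
      * destruct p.
        -- apply (Fup x); auto. unfold ble, fab, al, be, ga; destruct q; simpl; stone.
        -- destruct q; [|discriminate]. apply (Fup y); auto. unfold ble, fab, al, be, ga; simpl; stone.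
      * apply Ftop.
Qed.
End CaseA.

Section Image.
Variables (A P : BA) (H : A -> P).
Hypothesis Hh : is_hom H.
Definition icar := {y : P | exists a, H a = y}.
Lemma ieq (u v : icar) : proj1_sig u = proj1_sig v -> u = v.
Proof. destruct u, v; simpl; intros; subst; f_equal; apply proof_irrelevance. Qed.
Lemma ij_ok (u v : icar) : exists a, H a = bjoin (proj1_sig u) (proj1_sig v).
Proof. destruct u as [y [a1 e1]], v as [z [a2 e2]]; exists (bjoin a1 a2). destruct Hh as [Hj _]. rewrite Hj; subst; reflexivity. Qed.
Lemma im_ok (u v : icar) : exists a, H a = bmeet (proj1_sig u) (proj1_sig v).
Proof. destruct u as [y [a1 e1]], v as [z [a2 e2]]; exists (bmeet a1 a2). destruct Hh as [_ [Hm _]]. rewrite Hm; subst; reflexivity. Qed.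
Lemma ic_ok (u : icar) : exists a, H a = bcompl (proj1_sig u).
Proof. destruct u as [y [a1 e1]]; exists (bcompl a1). destruct Hh as [_ [_ [Hc _]]]. rewrite Hc; subst; reflexivity. Qed.
Lemma i0_ok : exists a, H a = bbot.
Proof. exists bbot. apply Hh. Qed.
Lemma i1_ok : exists a, H a = btop.
Proof. exists btop. apply Hh. Qed.
Definition ijoin (u v : icar) : icar := exist _ _ (ij_ok u v).
Definition imeet (u v : icar) : icar := exist _ _ (im_ok u v).
Definition icompl (u : icar) : icar := exist _ _ (ic_ok u).
Definition ibot : icar := exist _ _ i0_ok.
Definition itop : icar := exist _ _ i1_ok.
Ltac ii := intros; apply ieq; simpl.
Lemma i1 u v : ijoin u v = ijoin v u. Proof. ii; apply joinC. Qed.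
Lemma i2 u v : imeet u v = imeet v u. Proof. ii; apply meetC. Qed.
Lemma i3 u v w : ijoin u (ijoin v w) = ijoin (ijoin u v) w. Proof. ii; apply joinA. Qed.
Lemma i4 u v w : imeet u (imeet v w) = imeet (imeet u v) w. Proof. ii; apply meetA. Qed.
Lemma i5 u v : ijoin u (imeet u v) = u. Proof. ii; apply absorbJM. Qed.
Lemma i6 u v : imeet u (ijoin u v) = u. Proof. ii; apply absorbMJ. Qed.
Lemma i7 u v w : imeet u (ijoin v w) = ijoin (imeet u v) (imeet u w). Proof. ii; apply distrMJ. Qed.
Lemma i8 u : ijoin u ibot = u. Proof. ii; apply join0. Qed.
Lemma i9 u : imeet u itop = u. Proof. ii; apply meet1. Qed.
Lemma i10 u : imeet u (icompl u) = ibot. Proof. ii; apply complM. Qed.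
Lemma i11 u : ijoin u (icompl u) = itop. Proof. ii; apply complJ. Qed.
Definition IB : BA := MkBA icar ijoin imeet icompl ibot itop i1 i2 i3 i4 i5 i6 i7 i8 i9 i10 i11.
Definition iemb (u : IB) : P := proj1_sig u.
Lemma iemb_hom : is_hom iemb.
Proof. repeat split. Qed.
Lemma iemb_inj : injective iemb.
Proof. intros u v; apply ieq. Qed.
Definition isurj (a : A) : IB := exist _ (H a) (ex_intro _ a eq_refl).
Lemma isurj_hom : is_hom isurj.
Proof. destruct Hh as [Hj [Hm [Hc [H0 H1]]]].
  repeat split; intros; apply ieq; simpl; auto. Qed.
Lemma isurj_surj : surjective isurj.
Proof. intros [z [a Ha]]. exists a. apply ieq. simpl. auto. Qed.
End Image.

Lemma K2 (K : sclass) : filter_class K -> ~ trivial_class K ->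
  (forall (A : BA) (F : A -> Prop), K A F -> BAinf A F) -> K BA2 (fun b => b = true).
Proof.
  intros [Ki [Ks [Kp Kspre]]] Hnt Hinf.
  assert (exists A0 F0, K A0 F0 /\ exists a0, ~ F0 a0) as [A0 [F0 [KA0 [a0 Ha0]]]].
  { apply NNPP; intro Hn; apply Hnt; intros A0 F0 KA0 a0; apply NNPP; intro; apply Hn; eauto. }
  destruct (Hinf _ _ KA0) as [[z0 Fz0] Fup].
  set (e := fun b : BA2 => if b then @btop A0 else bbot).
  assert (He : is_hom e).
  { repeat split; intros; repeat match goal with b : car BA2 |- _ => destruct b end;
    unfold e; simpl; stone. }
  assert (Ft : F0 btop) by (eapply Fup; eauto; apply ble_top).
  assert (Fb : ~ F0 bbot) by (intro; apply Ha0; eapply Fup; eauto; apply ble_bot).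
  assert (Hi : injective e).
  { intros [|] [|]; unfold e; simpl; auto; intro H; [exfalso|exfalso]; rewrite H in *; auto. }
  assert (KS := Ks A0 BA2 _ e He Hi KA0).
  apply (Ki _ _ _ (fun b : BA2 => b = true) (fun s => s)) in KS; auto.
  - repeat split; auto.
  - intros u v; auto.
  - intros u; exists u; auto.
  - intros [|]; unfold e; simpl; intuition discriminate.
Qed.

Lemma caseB (K : sclass) : filter_class K -> K BA2 (fun b => b = true) ->
  forall (A : BA) (F : A -> Prop), BA1 A F -> K A F.
Proof.
  intros KK K2' A F [Fne [Fup Fm]].
  destruct KK as [Ki [Ks [Kp Kspre]]].
  set (I := {z : A | ~ F z}).
  assert (Hch : forall i : I, exists h : A -> BA2, is_hom h /\ (forall z, F z -> h z = true) /\ h (proj1_sig i) = false).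
  { intros [z Hz]. apply ultra; auto. }
  set (hh := fun i => proj1_sig (constructive_indefinite_description _ (Hch i))).
  assert (hhP : forall i, is_hom (hh i) /\ (forall z, F z -> hh i z = true) /\ hh i (proj1_sig i) = false).
  { intro i. unfold hh. destruct constructive_indefinite_description; simpl; auto. }
  set (H := (fun z i => hh i z) : A -> prodBA I (fun _ => BA2)).
  assert (Hh : is_hom H).
  { repeat split; intros; apply functional_extensionality_dep; intro i; destruct (hhP i) as [[Hj [Hm [Hc [H0 H1]]]] _];
    unfold H; simpl; auto. }
  assert (KP := Kp I (fun _ => BA2) (fun _ b => b = true) (fun _ => K2')).
  assert (KS := Ks (prodBA I (fun _ => BA2)) (IB A _ H Hh) _ (iemb A _ H Hh) (iemb_hom A _ H Hh) (iemb_inj A _ H Hh) KP).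
  assert (KA := Kspre _ _ _ (isurj A _ H Hh) (isurj_hom A _ H Hh) (isurj_surj A _ H Hh) KS).
  simpl in KA. unfold iemb in KA. simpl in KA.
  apply (Ki _ _ _ F (fun s => s)) in KA; auto.
  - repeat split; auto.
  - intros u v; auto.
  - intros u; exists u; auto.
  - intro z. split.
    + intro Hz. apply NNPP; intro Hn.
      pose proof (Hz (exist _ z Hn)) as Hq. destruct (hhP (exist _ z Hn)) as [_ [_ Hf]].
      simpl in Hf. unfold H in Hq. simpl in Hq. congruence.
    + intros Hz i. apply (hhP i); auto.
Qed.

Theorem mainTheorem17 (K : sclass) :
  filter_class K ->
  ~ trivial_class K ->
  (forall (A : BA) (F : A -> Prop), K A F -> BAinf A F) ->
  ~ (forall (A : BA) (F : A -> Prop), K A F <-> BA1 A F) ->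
  K BA2_2x2 P2x1.
Proof.
  intros KK Hnt Hinf Hne.
  assert (K2' := K2 K KK Hnt Hinf).
  assert (exists A F, ~ (K A F <-> BA1 A F)) as [A [F HAF]].
  { apply NNPP; intro Hn; apply Hne; intros A F; apply NNPP; intro; apply Hn; eauto. }
  destruct (classic (K A F)) as [KAF|KAF].
  - destruct (Hinf _ _ KAF) as [Fne Fup].
    destruct (classic (exists x y, F x /\ F y /\ ~ F (bmeet x y))) as [[x [y [Fx [Fy Fxy]]]]|Hn].
    + exact (caseA A F x y Fup Fx Fy Fxy K KK KAF).
    + exfalso; apply HAF; split; auto. intros _. split; auto. split; auto.
      intros x y Fx Fy; apply NNPP; intro; apply Hn; eauto.
  - exfalso; apply HAF; split; intro H; [contradiction|]. exact (caseB K KK K2' A F H).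
Qed.
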